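(* Let $E$ and $E^c=\partial\overline{\mathcal{G}}\setminus E$ be nonempty clopen subsets of $\partial\overline{\mathcal{G}}$. Let $f:\overline{\mathcal{G}}\to\mathbb{R}$ be harmonic with $f(x)=C\ge 0$ for $x\in E$ and $f(x)>C$ for $x\in E^c$. Let $\epsilon>0$ be such that $N_\epsilon(E)$ has finite volume. Let $t$ be a regular value of $f$ with $C<t<\min_{x\in E^c}f(x)$ and $\{x: f(x)\le t\}\subset N_\epsilon(E)$. Then every $x\in\mathcal{G}$ with $f(x)=t$ can be connected to $\partial\overline{\mathcal{G}}$ by a path $\gamma$ lying in the set $\{f\le t\}$, and $\gamma$ can be chosen to have a single limit point in $\partial\overline{\mathcal{G}}$.
   Context: $\mathcal{G}$ is a connected, locally finite metric graph with countable vertex set and countable edge set. Each edge has a positive length and is identified with an interval. $\mathcal{G}$ carries the geodesic distance $d$, and $\overline{\mathcal{G}}$ is its metric completion. A designated set of vertices, containing all vertices of degree $1$, forms the boundary vertices. $\mathcal{G}_{int}$ is $\mathcal{G}$ minus the boundary vertices, and $\partial\overline{\mathcal{G}}=\overline{\mathcal{G}}\setminus\mathcal{G}_{int}$. Standing assumptions: $\overline{\mathcal{G}}$ is compact and $\partial\overline{\mathcal{G}}$ is totally disconnected. Clopen means open and closed in $\partial\overline{\mathcal{G}}$. $N_\epsilon(E)$ is the union of open balls of radius $\epsilon$ about points of $E$, and its volume is the Lebesgue measure of its intersection with the edges. A function $f:\overline{\mathcal{G}}\to\mathbb{R}$ is harmonic if it is continuous, linear on each edge, and satisfies $\sum_{e\sim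 v}\partial_\nu f_e(v)=0$ at every interior vertex $v$, where $\partial_\nu f_e(v)$ is the derivative of $f_e$ at $v$ in the direction from $v$ into $e$. A point $x\in\mathcal{G}$ is a critical point of $f$ if $x$ is a vertex or $f'(x)=0$. A number $c$ is a critical value if $f^{-1}(c)$ contains a critical point. Values in the range of $f$ that are not critical values are regular values. A path may be finite (traversing finitely many edges) or infinite: $\gamma:[0,L)\to\mathcal{G}$ traversing an infinite sequence of successively adjacent edges with total length $L<\infty$. Its limit points are the limits in $\overline{\mathcal{G}}$ of $\gamma(s_k)$ as $s_k\to L$. *)

(* Defs.v *)
From Stdlib Require Import Reals List.
From mathcomp Require Import all_boot all_algebra.
From mathcomp Require Import classical_sets reals ereal Rstruct lebesgue_measure.

(* Edge e is identified with the
   interval [0, len e], coordinate 0 at [src e], coordinate [len e] at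
   [tgt e]. *)
Record MGraph := {
  V : Type;
  Ed : Type;
  src : Ed -> V;
  tgt : Ed -> V;
  len : Ed -> R;
  Bd : V -> Prop
}.

Arguments src {m} _.
Arguments tgt {m} _.
Arguments len {m} _.

Set Implicit Arguments.
Unset Strict Implicit.

Section MetricGraph.
Variable G : MGraph.

Local Open Scope R_scope.

Definition endpt (e : Ed G) (b : bool) : V G := if b then src e else tgt e.

Definition Pt : Type :=
  (V G + { p : Ed G * R | 0 < snd p < len (fst p) })%type.

Definition on_edge (e : Ed G) (x : Pt) (c : R) : Prop :=
  (x = inl (src e) /\ c = 0) \/
  (x = inl (tgt e) /\ c = len e) \/
  (exists p, x = inr p /\ fst (proj1_sig p) = e /\ snd (proj1_sig p) = c).

(* the point of (closed) edge e at coordinate s (clamped to [0, len e]) *)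
Definition edge_pt (e : Ed G) (s : R) : Pt :=
  match Rle_dec s 0 with
  | left _ => inl (src e)
  | right h1 =>
    match Rle_dec (len e) s with
    | left _ => inl (tgt e)
    | right h2 =>
        inr (exist (fun p : Ed G * R => 0 < snd p < len (fst p)) (e, s)
               (conj (Rnot_le_lt _ _ h1) (Rnot_le_lt _ _ h2)))
    end
  end.

Definition pos_lengths : Prop := forall e : Ed G, 0 < len e.

Definition countable_type (T : Type) : Prop :=
  exists g : T -> nat, forall x y, g x = g y -> x = y.

Definition countable_graph : Prop := countable_type (V G) /\ countable_type (Ed G).

Definition locally_finite : Prop :=
  forall v : V G, exists l : list (Ed G * bool),
    forall e b, In (e, b) l <-> endpt e b = v.

Definition adjacent (u w : V G) : Prop := exists e : Ed G, src e = u /\ tgt e = w.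

Definition connected_graph : Prop :=
  forall u w : V G, Relation_Operators.clos_refl_sym_trans (V G) adjacent u w.

Definition degree_one (v : V G) : Prop :=
  exists (e : Ed G) b, forall (e' : Ed G) b', endpt e' b' = v <-> (e', b') = (e, b).

Definition Bd_contains_leaves : Prop := forall v, degree_one v -> Bd G v.

Inductive chain : Pt -> Pt -> R -> Prop :=
| chain_nil x : chain x x 0
| chain_cons x y z e a b c :
    on_edge e x a -> on_edge e y b -> chain y z c ->
    chain x z (Rabs (a - b) + c).

(* geodesic distance: d x y < r  (d = infimum of lengths of such paths) *)
Definition dlt (x y : Pt) (r : R) : Prop := exists c, chain x y c /\ c < r.

(* Points of the completion are represented by Cauchy sequences in (G,d);
   two of them represent the same point iff their distance D is 0. *)
Definition Gbar := nat -> Pt.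

Definition IsCS (u : Gbar) : Prop :=
  forall eps, 0 < eps -> exists N, forall m n, (N <= m)%nat -> (N <= n)%nat ->
    dlt (u m) (u n) eps.

(* D u v < r,  where D u v = lim_n d (u n) (v n) is the completion metric *)
Definition Dlt (u v : Gbar) (r : R) : Prop :=
  exists r', r' < r /\ exists N, forall n, (N <= n)%nat -> dlt (u n) (v n) r'.

Definition Deq0 (u v : Gbar) : Prop := forall eps, 0 < eps -> Dlt u v eps.

Definition emb (x : Pt) : Gbar := fun _ => x.

Definition Gint (x : Pt) : Prop :=
  match x with inl v => ~ Bd G v | inr _ => True end.

Definition bdry (u : Gbar) : Prop :=
  IsCS u /\ ~ (exists x, Gint x /\ Deq0 u (emb x)).

Definition open_Gbar (U : Gbar -> Prop) : Prop :=
  forall u, IsCS u -> U u -> exists r, 0 < r /\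
    forall v, IsCS v -> Dlt u v r -> U v.

Definition compact_Gbar : Prop :=
  forall (I : Type) (U : I -> Gbar -> Prop),
    (forall i, open_Gbar (U i)) ->
    (forall u, IsCS u -> exists i, U i u) ->
    exists l : list I, forall u, IsCS u -> exists i, In i l /\ U i u.

Definition connected_set (A : Gbar -> Prop) : Prop :=
  forall U W, open_Gbar U -> open_Gbar W ->
    (forall u, A u -> U u \/ W u) ->
    (forall u, A u -> U u -> W u -> False) ->
    (exists u, A u /\ U u) -> (exists u, A u /\ W u) -> False.

Definition bdry_totally_disconnected : Prop :=
  forall A : Gbar -> Prop, (forall u, A u -> bdry u) -> connected_set A ->
    forall u v, A u -> A v -> Deq0 u v.

(* sets of points of Gbar must be invariant under the identification D = 0 *)
Definition saturated (A : Gbar -> Prop) : Prop :=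
  forall u v, IsCS u -> IsCS v -> Deq0 u v -> A u -> A v.

Definition open_in_bdry (A : Gbar -> Prop) : Prop :=
  forall u, A u -> exists r, 0 < r /\ forall v, bdry v -> Dlt u v r -> A v.

Definition clopen_bdry (A : Gbar -> Prop) : Prop :=
  saturated A /\ (forall u, A u -> bdry u) /\ open_in_bdry A /\
  open_in_bdry (fun u => bdry u /\ ~ A u).

Definition continuous_Gbar (f : Gbar -> R) : Prop :=
  forall u, IsCS u -> forall eps, 0 < eps -> exists delta, 0 < delta /\
    forall v, IsCS v -> Dlt u v delta -> Rabs (f u - f v) < eps.

Definition f_edge (f : Gbar -> R) (e : Ed G) (s : R) : R := f (emb (edge_pt e s)).

Definition linear_on_edges (f : Gbar -> R) : Prop :=
  forall e : Ed G, exists a b, forall s, 0 <= s <= len e -> f_edge f e s = a + b * s.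

Definition edge_slope (f : Gbar -> R) (e : Ed G) : R :=
  (f_edge f e (len e) - f_edge f e 0) / len e.

(* d_nu f_e(v) at the end (e,b) of e, in the direction from v into e:
   slope at the tail, minus the slope at the head. *)
Definition dnu (f : Gbar -> R) (e : Ed G) (b : bool) : R :=
  if b then edge_slope f e else - edge_slope f e.

Fixpoint sum_dnu (f : Gbar -> R) (l : list (Ed G * bool)) : R :=
  match l with
  | nil => 0
  | (e, b) :: l' => dnu f e b + sum_dnu f l'
  end.

(* Kirchhoff condition at every interior vertex; the sum runs over all
   edge-ends at v (a loop at v contributes both of its ends). *)
Definition kirchhoff (f : Gbar -> R) : Prop :=
  forall v : V G, ~ Bd G v ->
    forall l : list (Ed G * bool), NoDup l ->
      (forall e b, In (e, b) l <-> endpt e b = v) ->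
      sum_dnu f l = 0.

Definition harmonic (f : Gbar -> R) : Prop :=
  continuous_Gbar f /\ linear_on_edges f /\ kirchhoff f.

Definition critical_point (f : Gbar -> R) (x : Pt) : Prop :=
  match x with
  | inl _ => True
  | inr p => derivable_pt_lim (f_edge f (fst (proj1_sig p))) (snd (proj1_sig p)) 0
  end.

Definition critical_value (f : Gbar -> R) (c : R) : Prop :=
  exists x, critical_point f x /\ f (emb x) = c.

Definition regular_value (f : Gbar -> R) (t : R) : Prop :=
  (exists u, IsCS u /\ f u = t) /\ ~ critical_value f t.

Definition Neps (E : Gbar -> Prop) (eps : R) (u : Gbar) : Prop :=
  IsCS u /\ exists p, E p /\ Dlt p u eps.

Definition edge_trace (A : Gbar -> Prop) (e : Ed G) : set R :=
  [set s | 0 < s < len e /\ A (emb (edge_pt e s))].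

Local Close Scope R_scope.
Local Open Scope ereal_scope.
(* finite volume: the (countable) sum over edges of the Lebesgue measures of
   the traces is finite, i.e. all its finite partial sums are bounded. *)
Definition finite_volume (A : Gbar -> Prop) : Prop :=
  exists M : R, forall l : list (Ed G), NoDup l ->
    \sum_(e <- l) (@lebesgue_measure R (edge_trace A e)) <= M%:E.
Local Close Scope ereal_scope.
Local Open Scope R_scope.

(* gamma : [0,L) -> G is a (finite or infinite) path starting at x, of total
   length L: it is cut at break points 0 = b 0 <= b 1 <= ... into pieces; on
   [b k, b (k+1)] it moves at unit speed inside the closed edge [e k].
   Either finitely many pieces (b k = L eventually) or infinitely many
   (b k < L, b k -> L). *)
Definition is_path (x : Pt) (gamma : R -> Pt) (L : R) : Prop :=
  0 < L /\ gamma 0 = x /\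
  exists (b : nat -> R) (e : nat -> Ed G) (c sg : nat -> R),
    b 0%nat = 0 /\ (forall k, b k <= b (S k)) /\
    ((exists n, forall k, (n <= k)%nat -> b k = L) \/
     ((forall k, b k < L) /\ Un_cv b L)) /\
    (forall k, (sg k = 1 \/ sg k = -1) /\
       forall s, b k <= s <= b (S k) -> s < L ->
         on_edge (e k) (gamma s) (c k + sg k * (s - b k))).

Definition path_limpt (gamma : R -> Pt) (L : R) (p : Gbar) : Prop :=
  IsCS p /\
  exists sq : nat -> R, (forall k, 0 <= sq k < L) /\ Un_cv sq L /\
    forall eps, 0 < eps -> exists N, forall k, (N <= k)%nat ->
      Dlt (emb (gamma (sq k))) p eps.

End MetricGraph.

(* Main.v *)
Require Import Defs.
From Stdlib Require Import Reals List Lra Lia.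
From Stdlib Require Import ClassicalEpsilon ProofIrrelevance Classical.
From mathcomp Require Import all_boot all_algebra.
From mathcomp Require Import classical_sets reals ereal Rstruct lebesgue_measure.
Local Open Scope R_scope.
Set Implicit Arguments.
Unset Strict Implicit.

Section Chains.
Variable G : MGraph.
Hypothesis Hlen : pos_lengths G.

Lemma chain_eq (x y : Pt G) c c' : chain x y c -> c = c' -> chain x y c'.
Proof. intros H E; subst; exact H. Qed.

Lemma chain_app (x y z : Pt G) c1 c2 : chain x y c1 -> chain y z c2 -> chain x z (c1 + c2).
Proof.
  intros H; revert z c2. induction H as [x|x y z' e a b c Ha Hb Hc IH]; intros z2 c2 H2.
  - apply (chain_eq H2). ring.
  - apply (chain_eq (chain_cons Ha Hb (IH _ _ H2))). ring.
Qed.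

Lemma chain_step (x y : Pt G) (e : Ed G) a b : on_edge e x a -> on_edge e y b -> chain x y (Rabs (a - b)).
Proof. intros Ha Hb. apply (chain_eq (chain_cons Ha Hb (chain_nil y))). ring. Qed.

Lemma chain_rev (x y : Pt G) c : chain x y c -> chain y x c.
Proof.
  induction 1 as [x|x y z' e a b c Ha Hb Hc IH].
  - apply chain_nil.
  - apply (chain_eq (chain_app IH (chain_step Hb Ha))).
    rewrite Rabs_minus_sym. ring.
Qed.

Lemma dlt_app (x y z : Pt G) c a r : chain x y c -> c <= a -> dlt y z r -> dlt x z (a + r).
Proof.
  intros H1 H2 [c' [H3 H4]]. exists (c + c'). split.
  - exact (chain_app H1 H3).
  - lra.
Qed.

Lemma edge_pt_0 (e : Ed G) : edge_pt e 0 = inl (src e).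
Proof. unfold edge_pt. destruct (Rle_dec 0 0); [reflexivity | exfalso; lra]. Qed.

Lemma edge_pt_len (e : Ed G) : edge_pt e (len e) = inl (tgt e).
Proof.
  pose proof (Hlen e). unfold edge_pt.
  destruct (Rle_dec (len e) 0); [exfalso; lra|].
  destruct (Rle_dec (len e) (len e)); [reflexivity | exfalso; lra].
Qed.

Lemma on_edge_edge_pt (e : Ed G) c : 0 <= c <= len e -> on_edge e (edge_pt e c) c.
Proof.
  intros Hc. unfold edge_pt.
  destruct (Rle_dec c 0) as [h1|h1].
  - left. split; [reflexivity | lra].
  - destruct (Rle_dec (len e) c) as [h2|h2].
    + right; left. split; [reflexivity | lra].
    + right; right. eexists. split; [reflexivity|]. simpl. split; reflexivity.
Qed.

Lemma edge_pt_inr (p : {p : Ed G * R | 0 < snd p < len (fst p)}) :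
  edge_pt (fst (proj1_sig p)) (snd (proj1_sig p)) = inr p.
Proof.
  destruct p as [[e s] H]. simpl in *. unfold edge_pt.
  destruct (Rle_dec s 0) as [h1|h1]; [exfalso; lra|].
  destruct (Rle_dec (len e) s) as [h2|h2]; [exfalso; lra|].
  f_equal. apply eq_sig_hprop; [intros; apply proof_irrelevance | reflexivity].
Qed.

Lemma on_edge_endpt (e : Ed G) b : on_edge e (inl (endpt e b)) (if b then 0 else len e).
Proof. destruct b; [left | right; left]; split; reflexivity. Qed.

Lemma on_edge_range (e : Ed G) (z : Pt G) c : on_edge e z c -> 0 <= c <= len e.
Proof.
  pose proof (Hlen e).
  intros [[_ ->]|[[_ ->]|[p [_ [He Hc]]]]]; try lra.
  destruct p as [[e' s] Hp]; simpl in *; subst; lra.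
Qed.

Lemma chain_phi (phi : Pt G -> R) (h : Ed G -> R -> R) :
  (forall e z c, on_edge e z c -> phi z = h e c) ->
  (forall e a b, Rabs (h e a - h e b) <= Rabs (a - b)) ->
  forall x z c, chain x z c -> Rabs (phi x - phi z) <= c.
Proof.
  intros Hon Hlip x z c H.
  induction H as [x|x y z' e a b c Ha Hb Hc IH].
  - rewrite Rminus_diag Rabs_R0. lra.
  - pose proof (Hon _ _ _ Ha) as E1. pose proof (Hon _ _ _ Hb) as E2.
    pose proof (Hlip e a b). rewrite E1. rewrite E2 in IH.
    replace (h e a - phi z') with ((h e a - h e b) + (h e b - phi z')) by ring.
    pose proof (Rabs_triang (h e a - h e b) (h e b - phi z')). lra.
Qed.

Lemma Rmin_lip a b a' b' d : Rabs (a - a') <= d -> Rabs (b - b') <= d ->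
  Rabs (Rmin a b - Rmin a' b') <= d.
Proof.
  unfold Rmin. intros H1 H2.
  destruct (Rle_dec a b); destruct (Rle_dec a' b');
  revert H1 H2; unfold Rabs; repeat destruct Rcase_abs; intros; lra.
Qed.

Definition dec (P : Prop) : bool := if excluded_middle_informative P then true else false.

Lemma decT (P : Prop) : P -> dec P = true.
Proof. intros H; unfold dec; destruct (excluded_middle_informative P) as [h|h]; [reflexivity|contradiction]. Qed.
Lemma decF (P : Prop) : ~ P -> dec P = false.
Proof. intros H; unfold dec; destruct (excluded_middle_informative P) as [h|h]; [contradiction|reflexivity]. Qed.

Hypothesis Hlf : locally_finite G.

Lemma min_len_list (l : list (Ed G * bool)) :
  exists r, 0 < r /\ r <= 1 /\ forall eb, In eb l -> r <= len (fst eb).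
Proof.
  induction l as [|[e b] l [r [H1 [H2 H3]]]].
  - exists 1. split; [lra|]. split; [lra|]. intros eb [].
  - exists (Rmin r (len e)). pose proof (Hlen e). split; [apply Rmin_glb_lt; lra|].
    split; [pose proof (Rmin_l r (len e)); lra|].
    intros eb [<-|Hin]; simpl.
    + apply Rmin_r.
    + pose proof (H3 eb Hin). pose proof (Rmin_l r (len e)). lra.
Qed.

Lemma isolate (y : Pt G) : exists r, 0 < r /\
  forall v c, chain (inl v) y c -> c < r -> y = inl v.
Proof.
  destruct y as [v | p].
  - destruct (Hlf v) as [l Hl].
    destruct (min_len_list l) as [r [Hr0 [Hr1 Hrl]]].
    assert (Hre : forall e b, endpt e b = v -> r <= len e).
    { intros e b Heb. apply (Hrl (e, b)). apply Hl. exact Heb. }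
    set (h := fun e c => Rmin r (Rmin (if dec (src e = v) then c else r)
                                       (if dec (tgt e = v) then len e - c else r))).
    set (phi := fun z : Pt G => match z with
                 | inl z' => if dec (z' = v) then 0 else r
                 | inr q => h (fst (proj1_sig q)) (snd (proj1_sig q)) end).
    assert (Hon : forall e z c, on_edge e z c -> phi z = h e c).
    { intros e z c [[-> ->]|[[-> ->]|[q [-> [He Hc]]]]].
      - simpl. unfold h. pose proof (Hlen e).
        destruct (excluded_middle_informative (src e = v)) as [E1|E1].
        + rewrite (decT E1). unfold Rmin.
          destruct (excluded_middle_informative (tgt e = v)) as [E2|E2];
            [rewrite (decT E2)|rewrite (decF E2)];
          repeat destruct Rle_dec; lra.
        + rewrite (decF E1).
          destruct (excluded_middle_informative (tgt e = v)) as [E2|E2];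
            [rewrite (decT E2); pose proof (Hre e false E2)|rewrite (decF E2)];
          unfold Rmin; repeat destruct Rle_dec; lra.
      - simpl. unfold h. pose proof (Hlen e).
        destruct (excluded_middle_informative (tgt e = v)) as [E1|E1].
        + rewrite (decT E1). unfold Rmin.
          destruct (excluded_middle_informative (src e = v)) as [E2|E2];
            [rewrite (decT E2)|rewrite (decF E2)];
          repeat destruct Rle_dec; lra.
        + rewrite (decF E1).
          destruct (excluded_middle_informative (src e = v)) as [E2|E2];
            [rewrite (decT E2); pose proof (Hre e true E2)|rewrite (decF E2)];
          unfold Rmin; repeat destruct Rle_dec; lra.
      - simpl. rewrite He Hc. reflexivity. }
    assert (Hlip : forall e a b, Rabs (h e a - h e b) <= Rabs (a - b)).
    { intros e a b. unfold h. apply Rmin_lip.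
      - rewrite Rminus_diag Rabs_R0. apply Rabs_pos.
      - apply Rmin_lip.
        + destruct (dec (src e = v)); [lra|rewrite Rminus_diag Rabs_R0; apply Rabs_pos].
        + destruct (dec (tgt e = v)).
          * replace (len e - a - (len e - b)) with (-(a - b)) by ring.
            rewrite Rabs_Ropp. lra.
          * rewrite Rminus_diag Rabs_R0; apply Rabs_pos. }
    exists r. split; [exact Hr0|].
    intros v' c Hc Hcr. pose proof (chain_phi Hon Hlip Hc) as Hb.
    simpl in Hb. rewrite (decT (erefl v)) in Hb.
    destruct (excluded_middle_informative (v' = v)) as [E|E].
    + subst; reflexivity.
    + rewrite (decF E) in Hb. rewrite Rminus_0_r Rabs_right in Hb; lra.
  - destruct p as [[e0 s0] Hp]. simpl in Hp.
    set (r := Rmin s0 (len e0 - s0)).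
    assert (Hr : 0 < r) by (unfold r; apply Rmin_glb_lt; lra).
    assert (Hr1 : r <= s0) by apply Rmin_l.
    assert (Hr2 : r <= len e0 - s0) by apply Rmin_r.
    set (h := fun e c => if dec (e = e0) then Rmin r (Rabs (c - s0)) else r).
    set (phi := fun z : Pt G => match z with
                 | inl _ => r
                 | inr q => h (fst (proj1_sig q)) (snd (proj1_sig q)) end).
    assert (Hon : forall e z c, on_edge e z c -> phi z = h e c).
    { intros e z c [[-> ->]|[[-> ->]|[q [-> [He Hc]]]]].
      - simpl. unfold h.
        destruct (excluded_middle_informative (e = e0)) as [E1|E1].
        + rewrite (decT E1). subst. rewrite Rabs_left; [|lra].
          unfold Rmin; destruct Rle_dec; lra.
        + rewrite (decF E1). reflexivity.
      - simpl. unfold h.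
        destruct (excluded_middle_informative (e = e0)) as [E1|E1].
        + rewrite (decT E1). subst. rewrite Rabs_right; [|lra].
          unfold Rmin; destruct Rle_dec; lra.
        + rewrite (decF E1). reflexivity.
      - simpl. rewrite He Hc. reflexivity. }
    assert (Hlip : forall e a b, Rabs (h e a - h e b) <= Rabs (a - b)).
    { intros e a b. unfold h. destruct (dec (e = e0)).
      - apply Rmin_lip; [rewrite Rminus_diag Rabs_R0; apply Rabs_pos|].
        pose proof (Rabs_triang_inv (a - s0) (b - s0)) as T1.
        pose proof (Rabs_triang_inv (b - s0) (a - s0)) as T2.
        replace (a - s0 - (b - s0)) with (a - b) in T1 by ring.
        replace (b - s0 - (a - s0)) with (-(a - b)) in T2 by ring.
        rewrite Rabs_Ropp in T2. unfold Rabs at 1; destruct Rcase_abs; lra.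
      - rewrite Rminus_diag Rabs_R0; apply Rabs_pos. }
    exists r. split; [exact Hr|].
    intros v' c Hc Hcr. exfalso. pose proof (chain_phi Hon Hlip Hc) as Hb.
    simpl in Hb. unfold h in Hb. simpl in Hb. rewrite (decT (erefl e0)) in Hb.
    rewrite Rminus_diag Rabs_R0 in Hb.
    unfold Rmin in Hb; destruct Rle_dec in Hb; [lra|].
    rewrite Rminus_0_r Rabs_right in Hb; lra.
Qed.


Variable f : Gbar G -> R.
Hypothesis Hf : harmonic f.

Definition FV (v : V G) : R := f (emb (inl v)).

Lemma f_edge_0 (e : Ed G) : f_edge f e 0 = FV (src e).
Proof. unfold f_edge, FV. rewrite edge_pt_0. reflexivity. Qed.
Lemma f_edge_len (e : Ed G) : f_edge f e (len e) = FV (tgt e).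
Proof. unfold f_edge, FV. rewrite edge_pt_len. reflexivity. Qed.

Lemma f_edge_formula (e : Ed G) s : 0 <= s <= len e ->
  f_edge f e s = FV (src e) + edge_slope f e * s.
Proof.
  intros Hs. destruct Hf as [_ [Hlin _]]. destruct (Hlin e) as [A [B HAB]].
  pose proof (Hlen e).
  assert (H0 : f_edge f e 0 = A + B * 0) by (apply HAB; lra).
  assert (H1 : f_edge f e (len e) = A + B * len e) by (apply HAB; lra).
  unfold edge_slope. rewrite <- f_edge_0. rewrite H0 H1 (HAB s Hs). field. lra.
Qed.

Lemma slope_F (e : Ed G) : edge_slope f e = (FV (tgt e) - FV (src e)) / len e.
Proof. unfold edge_slope. rewrite f_edge_0 f_edge_len. reflexivity. Qed.

Lemma dnu_F (e : Ed G) b : dnu f e b = (FV (endpt e (negb b)) - FV (endpt e b)) / len e.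
Proof.
  pose proof (Hlen e). destruct b; unfold dnu; rewrite slope_F; simpl; [reflexivity|].
  field. lra.
Qed.

Lemma f_pt_le_max (e : Ed G) s : 0 <= s <= len e ->
  f (emb (edge_pt e s)) <= Rmax (FV (src e)) (FV (tgt e)).
Proof.
  intros Hs. change (f (emb (edge_pt e s))) with (f_edge f e s).
  rewrite (f_edge_formula Hs) slope_F. pose proof (Hlen e).
  set (th := s / len e).
  assert (Hth : 0 <= th <= 1).
  { unfold th. split. unfold Rdiv; apply Rmult_le_pos; [lra|left; apply Rinv_0_lt_compat; lra].
    apply (Rmult_le_reg_r (len e)); [lra|]. unfold Rdiv. rewrite Rmult_assoc Rinv_l; lra. }
  replace ((FV (tgt e) - FV (src e)) / len e * s) with ((FV (tgt e) - FV (src e)) * th)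
    by (unfold th; field; lra).
  pose proof (Rmax_l (FV (src e)) (FV (tgt e))). pose proof (Rmax_r (FV (src e)) (FV (tgt e))).
  destruct (Rle_dec (FV (src e)) (FV (tgt e))); nra.
Qed.

Lemma nodup_exists {A : Type} (l : list A) : exists l', NoDup l' /\ forall x, In x l' <-> In x l.
Proof.
  induction l as [|a l [l' [Hn Hi]]].
  - exists nil. split; [constructor|]. tauto.
  - destruct (classic (In a l')) as [Ha|Ha].
    + exists l'. split; [exact Hn|]. intros x. rewrite Hi. simpl. split; [tauto|].
      intros [<-|H]; [apply Hi; exact Ha|exact H].
    + exists (a :: l'). split; [constructor; assumption|]. intros x. simpl. rewrite Hi. tauto.
Qed.

Lemma sum_dnu_pos (l : list (Ed G * bool)) eb0 :
  (forall eb, In eb l -> 0 <= dnu f (fst eb) (snd eb)) -> In eb0 l ->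
  0 < dnu f (fst eb0) (snd eb0) -> 0 < sum_dnu f l.
Proof.
  induction l as [|[e b] l IH]; intros Hall Hin Hpos; [destruct Hin|].
  simpl. assert (Hl : forall eb, In eb l -> 0 <= dnu f (fst eb) (snd eb))
    by (intros; apply Hall; right; assumption).
  assert (H0 : 0 <= dnu f e b) by (apply (Hall (e, b)); left; reflexivity).
  assert (Hs : 0 <= sum_dnu f l).
  { clear IH Hin Hpos Hall. induction l as [|[e' b'] l IH2]; simpl; [lra|].
    assert (0 <= dnu f e' b') by (apply (Hl (e', b')); left; reflexivity).
    assert (0 <= sum_dnu f l) by (apply IH2; intros; apply Hl; right; assumption). lra. }
  destruct Hin as [<-|Hin]; simpl in *.
  - lra.
  - pose proof (IH Hl Hin Hpos). lra.
Qed.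

Lemma kirch_step (v : V G) : ~ Bd G v ->
  (exists e b, endpt e b = v /\ 0 < dnu f e b) ->
  exists e b, endpt e b = v /\ dnu f e b < 0.
Proof.
  intros Hv [e0 [b0 [H0 H0p]]].
  apply NNPP. intros Hneg.
  destruct (Hlf v) as [l Hl]. destruct (nodup_exists l) as [l' [Hn Hi]].
  destruct Hf as [_ [_ Hk]].
  assert (Hz : sum_dnu f l' = 0).
  { apply (Hk v Hv l' Hn). intros e b. rewrite Hi. apply Hl. }
  assert (Hp : 0 < sum_dnu f l').
  { apply (sum_dnu_pos (eb0 := (e0, b0))).
    - intros [e b] Hin. simpl. apply Hi in Hin. apply Hl in Hin.
      apply Rnot_lt_le. intros Hlt. apply Hneg. exists e, b. split; assumption.
    - apply Hi. apply Hl. exact H0.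
    - exact H0p. }
  lra.
Qed.

Lemma deriv_local (g : R -> R) A B s d : 0 < d ->
  (forall u, Rabs (u - s) < d -> g u = A + B * u) -> derivable_pt_lim g s B.
Proof.
  intros Hd Hg eps Heps. exists (mkposreal d Hd). intros h Hh Hhd. simpl in Hhd.
  rewrite (Hg (s + h)); [|replace (s + h - s) with h by ring; exact Hhd].
  rewrite (Hg s); [|rewrite Rminus_diag Rabs_R0; exact Hd].
  replace ((A + B * (s + h) - (A + B * s)) / h - B) with 0 by (field; exact Hh).
  rewrite Rabs_R0. exact Heps.
Qed.


Lemma on_edge_eqc (e : Ed G) z c c' : on_edge e z c -> c = c' -> on_edge e z c'.
Proof. intros H E; subst; exact H. Qed.

Lemma edge_pt_on (e : Ed G) z c : on_edge e z c -> edge_pt e c = z.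
Proof.
  intros [[-> ->]|[[-> ->]|[q [-> [He Hc]]]]].
  - apply edge_pt_0.
  - apply edge_pt_len.
  - rewrite <- He, <- Hc. apply edge_pt_inr.
Qed.

Variable e0 : Ed G.
Variable v0 : V G.
Variables c0 sg0 l0 t : R.
Hypothesis Hin0 : exists e b, endpt e b = v0 /\ 0 < dnu f e b.
Hypothesis Hl0 : 0 < l0.
Hypothesis Hsg0 : sg0 = 1 \/ sg0 = -1.
Hypothesis Hc0 : forall u, 0 <= u <= l0 -> 0 <= c0 + sg0 * u <= len e0.
Hypothesis Hend0 : on_edge e0 (inl v0) (c0 + sg0 * l0).
Hypothesis Hv0t : FV v0 < t.
Hypothesis Hpiece0 : forall u, 0 <= u <= l0 -> f (emb (edge_pt e0 (c0 + sg0 * u))) <= t.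

Definition nxt (v : V G) : Ed G * bool :=
  epsilon (inhabits (e0, true))
    (fun eb => endpt (fst eb) (snd eb) = v /\ dnu f (fst eb) (snd eb) < 0).

Fixpoint w (k : nat) : V G :=
  match k with
  | O => v0
  | S j => if dec (Bd G (w j)) then w j
           else endpt (fst (nxt (w j))) (negb (snd (nxt (w j))))
  end.

Lemma w_S_Bd k : Bd G (w k) -> w (S k) = w k.
Proof. intros H. simpl. rewrite (decT H). reflexivity. Qed.

Lemma w_S_nBd k : ~ Bd G (w k) ->
  w (S k) = endpt (fst (nxt (w k))) (negb (snd (nxt (w k)))).
Proof. intros H. simpl. rewrite (decF H). reflexivity. Qed.

Lemma nxt_spec v : ~ Bd G v -> (exists e b, endpt e b = v /\ 0 < dnu f e b) ->
  endpt (fst (nxt v)) (snd (nxt v)) = v /\ dnu f (fst (nxt v)) (snd (nxt v)) < 0.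
Proof.
  intros Hv Hin. destruct (kirch_step Hv Hin) as [e [b Hb]].
  unfold nxt. apply (epsilon_spec (inhabits (e0, true))
    (fun eb => endpt (fst eb) (snd eb) = v /\ dnu f (fst eb) (snd eb) < 0)).
  exists (e, b). exact Hb.
Qed.

Lemma dnu_neg (e : Ed G) b : dnu f e (negb b) = - dnu f e b.
Proof. destruct b; unfold dnu; simpl; ring. Qed.

Lemma negb_negb' b : negb (negb b) = b.
Proof. destruct b; reflexivity. Qed.

Lemma w_inv k : exists e b, endpt e b = w k /\ 0 < dnu f e b.
Proof.
  induction k as [|k IH]; [exact Hin0|].
  destruct (classic (Bd G (w k))) as [H|H].
  - rewrite (w_S_Bd H). exact IH.
  - destruct (nxt_spec H IH) as [H1 H2]. rewrite (w_S_nBd H).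
    exists (fst (nxt (w k))), (negb (snd (nxt (w k)))). split; [reflexivity|].
    rewrite dnu_neg. lra.
Qed.

Lemma w_step k : ~ Bd G (w k) ->
  endpt (fst (nxt (w k))) (snd (nxt (w k))) = w k /\ dnu f (fst (nxt (w k))) (snd (nxt (w k))) < 0.
Proof. intros H. exact (nxt_spec H (w_inv k)). Qed.

Lemma F_step k : ~ Bd G (w k) -> FV (w (S k)) < FV (w k).
Proof.
  intros H. destruct (w_step H) as [H1 H2]. rewrite dnu_F in H2.
  rewrite (w_S_nBd H). rewrite H1 in H2.
  pose proof (Hlen (fst (nxt (w k)))).
  set (a := FV (endpt (fst (nxt (w k))) (negb (snd (nxt (w k)))))) in *.
  set (bv := FV (w k)) in *.
  destruct (Rlt_or_le a bv) as [h|h]; [exact h|].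
  exfalso. assert (0 <= (a - bv) / len (fst (nxt (w k)))).
  { unfold Rdiv. apply Rmult_le_pos; [lra|left; apply Rinv_0_lt_compat; lra]. }
  lra.
Qed.

Lemma F_noninc k : FV (w (S k)) <= FV (w k).
Proof.
  destruct (classic (Bd G (w k))) as [H|H].
  - rewrite (w_S_Bd H). lra.
  - left. apply F_step. exact H.
Qed.

Lemma F_le j k : (le j k) -> FV (w k) <= FV (w j).
Proof.
  intros Hjk. induction Hjk as [|k Hjk IH]; [lra|].
  pose proof (F_noninc k). lra.
Qed.

Lemma F_le_v0 k : FV (w k) <= FV v0.
Proof. apply (F_le (j := 0%nat)). lia. Qed.

Lemma Bd_up j k : (le j k) -> Bd G (w j) -> Bd G (w k) /\ w k = w j.
Proof.
  intros Hjk Hj. induction Hjk as [|k Hjk IH]; [split; [exact Hj|reflexivity]|].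
  destruct IH as [IH1 IH2]. rewrite (w_S_Bd IH1). split; assumption.
Qed.

Lemma nBd_down j k : (le j k) -> ~ Bd G (w k) -> ~ Bd G (w j).
Proof. intros Hjk Hk Hj. apply Hk. exact (proj1 (Bd_up Hjk Hj)). Qed.

Lemma F_strict j k : (lt j k) -> ~ Bd G (w j) -> FV (w k) < FV (w j).
Proof.
  intros Hjk Hj. pose proof (F_step Hj). pose proof (F_le (j := S j) (k := k) Hjk). lra.
Qed.

Definition ed (k : nat) : Ed G := match k with O => e0 | S j => fst (nxt (w j)) end.
Definition ell (k : nat) : R :=
  match k with O => l0 | S j => if dec (Bd G (w j)) then 0 else len (fst (nxt (w j))) end.
Definition cc (k : nat) : R :=
  match k with O => c0 | S j => if snd (nxt (w j)) then 0 else len (fst (nxt (w j))) end.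
Definition sg (k : nat) : R :=
  match k with O => sg0 | S j => if snd (nxt (w j)) then 1 else -1 end.
Fixpoint bb (k : nat) : R := match k with O => 0 | S j => bb j + ell j end.

Lemma ell_nBd j : ~ Bd G (w j) -> ell (S j) = len (ed (S j)).
Proof. intros H. simpl. rewrite (decF H). reflexivity. Qed.
Lemma ell_Bd j : Bd G (w j) -> ell (S j) = 0.
Proof. intros H. simpl. rewrite (decT H). reflexivity. Qed.

Lemma ell_nonneg k : 0 <= ell k.
Proof.
  destruct k as [|j]; simpl; [lra|].
  destruct (dec (Bd G (w j))); [lra|]. pose proof (Hlen (fst (nxt (w j)))). lra.
Qed.

Lemma ell_pos_cases k : 0 < ell k -> k = O \/ exists j, k = S j /\ ~ Bd G (w j).
Proof.
  intros H. destruct k as [|j]; [left; reflexivity|]. right. exists j. split; [reflexivity|].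
  intros HB. rewrite (ell_Bd HB) in H. lra.
Qed.

Lemma sg_pm k : sg k = 1 \/ sg k = -1.
Proof. destruct k as [|j]; simpl; [exact Hsg0|]. destruct (snd (nxt (w j))); [left|right]; reflexivity. Qed.

Lemma bb_mono j k : (le j k) -> bb j <= bb k.
Proof.
  intros Hjk. induction Hjk as [|k Hjk IH]; [lra|]. simpl. pose proof (ell_nonneg k). lra.
Qed.

Lemma coord_ok k u : 0 <= u <= ell k -> 0 <= cc k + sg k * u <= len (ed k).
Proof.
  intros Hu. destruct k as [|j]; [apply Hc0; exact Hu|].
  simpl in *. pose proof (Hlen (fst (nxt (w j)))).
  destruct (dec (Bd G (w j))).
  - assert (u = 0) by lra. subst. destruct (snd (nxt (w j))); lra.
  - destruct (snd (nxt (w j))); lra.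
Qed.

Lemma startS j : ~ Bd G (w j) -> on_edge (ed (S j)) (inl (w j)) (cc (S j)).
Proof.
  intros H. destruct (w_step H) as [H1 _]. simpl.
  pose proof (on_edge_endpt (fst (nxt (w j))) (snd (nxt (w j)))) as Hx. rewrite H1 in Hx. exact Hx.
Qed.

Lemma endS j : ~ Bd G (w j) -> on_edge (ed (S j)) (inl (w (S j))) (cc (S j) + sg (S j) * ell (S j)).
Proof.
  intros H. rewrite (ell_nBd H) (w_S_nBd H). simpl.
  eapply on_edge_eqc; [apply on_edge_endpt|].
  destruct (snd (nxt (w j))); simpl; ring.
Qed.

Lemma piece_end k : 0 < ell k -> on_edge (ed k) (inl (w k)) (cc k + sg k * ell k).
Proof.
  intros H. destruct (ell_pos_cases H) as [->|[j [-> Hj]]].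
  - exact Hend0.
  - exact (endS Hj).
Qed.

Lemma abs_pm a x : a = 1 \/ a = -1 -> Rabs (a * x) = Rabs x.
Proof. intros [-> | ->]; unfold Rabs; repeat destruct Rcase_abs; lra. Qed.

Lemma chain_w j n : (le j n) -> chain (inl (w j)) (inl (w n)) (bb (S n) - bb (S j)).
Proof.
  intros Hjn. induction Hjn as [|n Hjn IH].
  - apply (chain_eq (chain_nil _)). ring.
  - destruct (classic (Bd G (w n))) as [HB|HB].
    + rewrite (w_S_Bd HB). apply (chain_eq IH). change (bb (S (S n))) with (bb (S n) + ell (S n)). rewrite (ell_Bd HB). ring.
    + apply (chain_eq (chain_app IH (chain_step (startS HB) (endS HB)))).
      change (bb (S (S n))) with (bb (S n) + ell (S n)).
      replace (cc (S n) - (cc (S n) + sg (S n) * ell (S n))) with (- (sg (S n) * ell (S n))) by ring.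
      rewrite Rabs_Ropp (abs_pm _ (sg_pm (S n))). pose proof (ell_nonneg (S n)).
      rewrite Rabs_right; lra.
Qed.

Definition gam (s : R) : Pt G :=
  let k := epsilon (inhabits 0%nat) (fun k => bb k <= s < bb (S k)) in
  edge_pt (ed k) (cc k + sg k * (s - bb k)).

Lemma gam_eq k s : bb k <= s < bb (S k) -> gam s = edge_pt (ed k) (cc k + sg k * (s - bb k)).
Proof.
  intros Hk. unfold gam.
  assert (Hs := epsilon_spec (inhabits 0%nat) (fun k => bb k <= s < bb (S k)) (ex_intro _ k Hk)).
  set (k' := epsilon (inhabits 0%nat) (fun k => bb k <= s < bb (S k))) in *.
  assert (k' = k) as ->; [|reflexivity].
  destruct (Nat.lt_trichotomy k' k) as [h|[h|h]]; [|exact h|].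
  - pose proof (bb_mono (j := S k') (k := k) h). lra.
  - pose proof (bb_mono (j := S k) (k := k') h). lra.
Qed.

Lemma chain_gam k s n : bb k <= s < bb (S k) -> (le k n) ->
  chain (gam s) (inl (w n)) (bb (S n) - s).
Proof.
  intros Hk Hkn. rewrite (gam_eq Hk).
  assert (Hell : 0 < ell k) by (simpl in Hk; lra).
  assert (Hc : 0 <= cc k + sg k * (s - bb k) <= len (ed k)) by (apply coord_ok; simpl in Hk; lra).
  pose proof (chain_step (on_edge_edge_pt Hc) (piece_end Hell)) as H1.
  apply (chain_eq (chain_app H1 (chain_w Hkn))).
  replace (cc k + sg k * (s - bb k) - (cc k + sg k * ell k)) with (sg k * (s - bb k - ell k)) by ring.
  rewrite (abs_pm _ (sg_pm k)). simpl in Hk |- *.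
  rewrite Rabs_left1; lra.
Qed.

Lemma maxF j : ~ Bd G (w j) -> Rmax (FV (src (ed (S j)))) (FV (tgt (ed (S j)))) = FV (w j).
Proof.
  intros H. pose proof (F_step H) as HF. destruct (w_step H) as [H1 _].
  rewrite (w_S_nBd H) in HF. simpl.
  destruct (snd (nxt (w j))); simpl in H1, HF |- *; rewrite H1.
  - apply Rmax_left. lra.
  - apply Rmax_right. lra.
Qed.

Lemma gam_f k s : bb k <= s < bb (S k) -> f (emb (gam s)) <= t.
Proof.
  intros Hk. rewrite (gam_eq Hk). simpl in Hk.
  assert (Hell : 0 < ell k) by lra.
  destruct (ell_pos_cases Hell) as [->|[j [-> Hj]]].
  - simpl in *. apply Hpiece0. lra.
  - assert (Hc : 0 <= cc (S j) + sg (S j) * (s - bb (S j)) <= len (ed (S j))) by (apply coord_ok; lra).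
    pose proof (f_pt_le_max Hc) as H1. rewrite (maxF Hj) in H1.
    pose proof (F_le_v0 j). lra.
Qed.

Lemma ed_distinct j k : (lt j k) -> ~ Bd G (w k) -> ed (S j) <> ed (S k).
Proof.
  intros Hjk Hk E. assert (Hj : ~ Bd G (w j)) by (apply (nBd_down (k := k)); [lia|exact Hk]).
  pose proof (maxF Hj) as M1. pose proof (maxF Hk) as M2. rewrite E in M1.
  pose proof (F_strict Hjk Hj). lra.
Qed.

Lemma meas_itv (a : R) : 0 < a -> (@lebesgue_measure R [set` `]0%R, a[%R]%classic = a%:E)%E.
Proof.
  intros Ha. rewrite lebesgue_measure_itv /=.
  have -> : (0%:E < a%:E)%E = true.
  { rewrite lte_fin. apply/RltP. exact Ha. }
  rewrite -EFinD. f_equal. rewrite GRing.subr0. reflexivity.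
Qed.

Lemma trace_itv (A : Gbar G -> Prop) (e : Ed G) :
  (forall s, 0 < s < len e -> A (emb (edge_pt e s))) ->
  edge_trace A e = [set` `]0%R, len e[%R]%classic.
Proof.
  intros H. apply boolp.funext => s. apply boolp.propext.
  rewrite /edge_trace /= in_itv /=. split.
  - intros [[H1 H2] _]. apply/andP; split; apply/RltP; assumption.
  - move=> /andP [/RltP H1 /RltP H2]. split; [split; assumption|]. apply H. split; assumption.
Qed.

Lemma emb_CS (x : Pt G) : IsCS (emb x).
Proof. intros eps Heps. exists 0%nat. intros m n _ _. exists 0. split; [apply chain_nil|exact Heps]. Qed.

Fixpoint lst (K : nat) : list (Ed G) :=
  match K with O => nil | S K' => ed (S K') :: lst K' end.

Lemma lst_in K e : In e (lst K) -> exists j, lt j K /\ e = ed (S j).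
Proof.
  induction K as [|K IH]; simpl; [intros []|].
  intros [<-|H]; [exists K; split; [lia|reflexivity]|].
  destruct (IH H) as [j [Hj ->]]. exists j. split; [lia|reflexivity].
Qed.

Section Vol.
Variable A : Gbar G -> Prop.
Hypothesis HA : forall u, IsCS u -> f u <= t -> A u.
Hypothesis HnB : forall j, ~ Bd G (w j).

Lemma lst_nodup K : NoDup (lst K).
Proof.
  induction K as [|K IH]; simpl; constructor; [|exact IH].
  intros Hin. destruct (lst_in Hin) as [j [Hj E]]. exact (ed_distinct Hj (@HnB K) (Logic.eq_sym E)).
Qed.

Lemma trace_full j s : 0 < s < len (ed (S j)) -> A (emb (edge_pt (ed (S j)) s)).
Proof.
  intros Hs. apply HA; [apply emb_CS|].
  assert (Hs' : 0 <= s <= len (ed (S j))) by lra.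
  pose proof (f_pt_le_max Hs') as H1. rewrite (maxF (@HnB j)) in H1.
  pose proof (F_le_v0 j). lra.
Qed.

Lemma lst_meas K : (\sum_(e <- lst K) (@lebesgue_measure R (edge_trace A e)))%E = (bb (S K) - l0)%:E.
Proof.
  induction K as [|K IH].
  - rewrite big_nil. assert (H : bb 1 - l0 = 0) by (simpl; ring). exact (Logic.eq_sym (f_equal EFin H)).
  - simpl lst. rewrite big_cons IH.
    rewrite (trace_itv (trace_full (j := K))). rewrite (meas_itv (Hlen _)).
    rewrite -EFinD. apply f_equal.
    assert (Heq : len (ed (S K)) + (bb (S K) - l0) = bb (S (S K)) - l0).
    { change (bb (S (S K))) with (bb (S K) + ell (S K)). rewrite (ell_nBd (@HnB K)). ring. }
    exact Heq.
Qed.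

Lemma bb_bounded : finite_volume A -> exists B, forall K, bb K <= B.
Proof.
  intros [M HM]. exists (l0 + M). intros K.
  assert (H : forall K, bb (S K) <= l0 + M).
  { intros K'. pose proof (HM _ (lst_nodup K')) as H1. rewrite lst_meas lee_fin in H1.
    move/RleP: H1 => H1. rewrite -RminusE in H1. lra. }
  destruct K as [|K]; [pose proof (H 0%nat); simpl in *; lra|apply H].
Qed.
End Vol.

Lemma half_pow k : 0 < (/2) ^ k <= 1.
Proof.
  induction k as [|k IH]; simpl; [lra|].
  split; [apply Rmult_lt_0_compat; lra|]. nra.
Qed.

Section WithL.
Variable L : R.
Hypothesis HL1 : forall k, bb k <= L.
Hypothesis HL2 : forall k, Bd G (w k) -> bb (S k) = L.
Hypothesis HL3 : forall s, s < L -> exists k, s < bb k.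
Hypothesis HL4 : forall eps, 0 < eps -> exists N, forall n, le N n -> L - bb n < eps.

Lemma find_piece s : 0 <= s < L -> exists k, bb k <= s < bb (S k).
Proof.
  intros Hs. destruct (HL3 (proj2 Hs)) as [n Hn]. induction n as [|n IH].
  - simpl in Hn. lra.
  - destruct (Rlt_or_le s (bb n)) as [h|h]; [exact (IH h)|]. exists n. split; assumption.
Qed.

Lemma bb_const n k : Bd G (w n) -> le (S n) k -> bb k = bb (S n).
Proof.
  intros Hn Hk. induction Hk as [|k Hk IH]; [reflexivity|].
  change (bb (S k)) with (bb k + ell k). destruct k as [|m]; [lia|].
  rewrite (ell_Bd (proj1 (Bd_up (j := n) (k := m) ltac:(lia) Hn))). rewrite IH. ring.
Qed.

Lemma L_pos : 0 < L.
Proof. pose proof (HL1 1). simpl in H. lra. Qed.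

Definition pp : Gbar G := fun n => inl (w n).

Lemma pp_CS : IsCS pp.
Proof.
  intros eps Heps. destruct (HL4 Heps) as [N HN]. exists N. intros m n Hm Hn.
  move/leP: Hm => Hm. move/leP: Hn => Hn. unfold pp.
  assert (Hb : forall a b, le N a -> le a b -> dlt (inl (w a)) (inl (w b)) eps).
  { intros a b Ha Hab. exists (bb (S b) - bb (S a)). split; [apply chain_w; exact Hab|].
    pose proof (HL1 (S b)). pose proof (bb_mono (j := N) (k := S a) ltac:(lia)).
    pose proof (HN N (le_n N)). lra. }
  destruct (Nat.le_ge_cases m n) as [h|h].
  - apply Hb; assumption.
  - destruct (Hb n m Hn h) as [c [Hc1 Hc2]]. exists c. split; [apply chain_rev; exact Hc1|exact Hc2].
Qed.

Lemma near_pp s eps : 0 <= s < L -> L - s < eps -> Dlt (emb (gam s)) pp eps.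
Proof.
  intros Hs Heps. destruct (find_piece Hs) as [k Hk].
  exists ((L - s + eps) / 2). split; [lra|]. exists k. intros n Hn. move/leP: Hn => Hn.
  exists (bb (S n) - s). split; [exact (chain_gam Hk Hn)|].
  pose proof (HL1 (S n)). lra.
Qed.

Lemma pp_limpt : path_limpt gam L pp.
Proof.
  pose proof L_pos as HL.
  split; [exact pp_CS|].
  exists (fun k => L - L * (/2) ^ (S k)). split; [|split].
  - intros k. pose proof (half_pow (S k)). split; nra.
  - intros eps Heps.
    destruct (pow_lt_1_zero (/2) ltac:(rewrite Rabs_right; lra) (eps / L)
      ltac:(apply Rdiv_lt_0_compat; lra)) as [N HN].
    exists N. intros n Hn. unfold R_dist.
    replace (L - L * (/2) ^ (S n) - L) with (- (L * (/2) ^ (S n))) by ring.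
    rewrite Rabs_Ropp. pose proof (HN (S n) ltac:(lia)) as H1.
    pose proof (half_pow (S n)).
    rewrite Rabs_right in H1; [|lra]. rewrite Rabs_right; [|nra].
    apply (Rmult_lt_compat_l L) in H1; [|lra].
    replace (L * (eps / L)) with eps in H1 by (field; lra). exact H1.
  - intros eps Heps.
    destruct (pow_lt_1_zero (/2) ltac:(rewrite Rabs_right; lra) (eps / L)
      ltac:(apply Rdiv_lt_0_compat; lra)) as [N HN].
    exists N. intros k Hk. move/leP: Hk => Hk. apply near_pp.
    + pose proof (half_pow (S k)). split; nra.
    + pose proof (HN (S k) ltac:(lia)) as H1. pose proof (half_pow (S k)).
      rewrite Rabs_right in H1; [|lra].
      apply (Rmult_lt_compat_l L) in H1; [|lra].
      replace (L * (eps / L)) with eps in H1 by (field; lra). lra.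
Qed.

Lemma pp_bdry : bdry pp.
Proof.
  split; [exact pp_CS|]. intros [y [Hy HD]].
  destruct (isolate y) as [r [Hr Hiso]].
  destruct (HD r Hr) as [r' [Hr' [N HN]]].
  assert (Hw : forall n, le N n -> y = inl (w n)).
  { intros n Hn. destruct (HN n ltac:(apply/leP; exact Hn)) as [c [Hc1 Hc2]].
    apply (Hiso (w n) c Hc1). lra. }
  pose proof (Hw N (le_n N)) as Q1. pose proof (Hw (S N) (le_S _ _ (le_n N))) as Q2.
  rewrite Q1 in Hy. simpl in Hy. pose proof (F_step Hy) as HF.
  assert (Ew : w N = w (S N)) by congruence. rewrite <- Ew in HF. exact (Rlt_irrefl _ HF).
Qed.

Lemma pp_unique q : path_limpt gam L q -> Deq0 pp q.
Proof.
  intros [HqCS [sq [Hsq1 [Hsq2 Hsq3]]]] eps Heps.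
  destruct (Hsq3 (eps / 2) ltac:(lra)) as [K1 HK1].
  destruct (Hsq2 (eps / 2) ltac:(lra)) as [K2 HK2].
  set (k := Nat.max K1 K2).
  pose proof (HK2 k ltac:(unfold k; lia)) as H2. unfold R_dist in H2.
  destruct (HK1 k ltac:(apply/leP; unfold k; lia)) as [r'' [Hr'' [N1 HN1]]].
  set (s := sq k) in *.
  pose proof (Hsq1 k) as Hs. fold s in Hs.
  destruct (find_piece Hs) as [j Hj].
  rewrite Rabs_left1 in H2; [|lra].
  exists ((L - s) + r''). split; [lra|].
  exists (Nat.max N1 j). intros n Hn. move/leP: Hn => Hn.
  unfold pp. apply (dlt_app (y := gam s) (c := bb (S n) - s)).
  - apply chain_rev. apply (chain_gam Hj); lia.
  - pose proof (HL1 (S n)). lra.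
  - apply HN1. apply/leP. lia.
Qed.

Lemma master (x : Pt G) : edge_pt e0 c0 = x ->
  is_path x gam L /\ (forall s, 0 <= s < L -> f (emb (gam s)) <= t) /\
  exists p : Gbar G, bdry p /\ path_limpt gam L p /\
    (forall q, path_limpt gam L q -> Deq0 p q).
Proof.
  intros Hx. split; [|split].
  - split; [exact L_pos|]. split.
    + assert (H0 : bb 0 <= 0 < bb 1) by (simpl; lra).
      rewrite (gam_eq H0). simpl. rewrite <- Hx. f_equal. ring.
    + exists bb, ed, cc, sg. split; [reflexivity|]. split; [intros k; apply bb_mono; lia|].
      split.
      * destruct (classic (exists n, Bd G (w n))) as [[n Hn]|Hn].
        -- left. exists (S n). intros k Hk. move/leP: Hk => Hk.
           rewrite (bb_const Hn Hk). apply HL2. exact Hn.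
        -- right. split.
           ++ intros k. assert (0 < ell k).
              { destruct k as [|j]; simpl; [lra|].
                rewrite (decF (fun H => Hn (ex_intro _ j H))). apply Hlen. }
              pose proof (HL1 (S k)). simpl in *. lra.
           ++ intros eps Heps. destruct (HL4 Heps) as [N HN]. exists N. intros n Hn'.
              unfold R_dist. pose proof (HN n Hn'). pose proof (HL1 n).
              rewrite Rabs_left1; lra.
      * intros k. split; [apply sg_pm|]. intros s Hs HsL.
        destruct (Rlt_or_le s (bb (S k))) as [h|h].
        -- rewrite (gam_eq (conj (proj1 Hs) h)). apply on_edge_edge_pt. apply coord_ok.
           simpl in *. lra.
        -- assert (Es : s = bb (S k)) by lra. subst s.
           assert (HnB : ~ Bd G (w k)) by (intros HB; rewrite (HL2 HB) in HsL; lra).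
           assert (Hpk : bb (S k) <= bb (S k) < bb (S (S k))).
           { change (bb (S (S k))) with (bb (S k) + ell (S k)). rewrite (ell_nBd HnB).
             pose proof (Hlen (ed (S k))). lra. }
           rewrite (gam_eq Hpk). rewrite Rminus_diag Rmult_0_r Rplus_0_r.
           rewrite (edge_pt_on (startS HnB)).
           assert (Hell : 0 < ell k).
           { destruct k as [|m]; simpl; [lra|].
             rewrite (decF (nBd_down (j := m) (k := S m) ltac:(lia) HnB)). apply Hlen. }
           apply (on_edge_eqc (piece_end Hell)). simpl. ring.
  - intros s Hs. destruct (find_piece Hs) as [k Hk]. exact (gam_f Hk).
  - exists pp. split; [exact pp_bdry|]. split; [exact pp_limpt|]. exact pp_unique.
Qed.
End WithL.

Lemma final_desc (A : Gbar G -> Prop) (HA : forall u, IsCS u -> f u <= t -> A u)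
  (Hfin : finite_volume A) (x : Pt G) (Hx : edge_pt e0 c0 = x) :
  exists (gamma : R -> Pt G) (L : R),
      is_path x gamma L /\
      (forall s, 0 <= s < L -> f (emb (gamma s)) <= t) /\
      exists p : Gbar G, bdry p /\ path_limpt gamma L p /\
        (forall q, path_limpt gamma L q -> Deq0 p q).
Proof.
  exists gam.
  destruct (classic (exists n, Bd G (w n))) as [[n Hn]|HnB].
  - exists (bb (S n)). apply master; [| | | |exact Hx].
    + intros k. destruct (Nat.le_gt_cases k (S n)) as [h|h].
      * apply bb_mono; exact h.
      * rewrite (bb_const Hn (k := k)); [lra|lia].
    + intros k Hk. destruct (Nat.le_gt_cases k n) as [h|h].
      * apply Logic.eq_sym. apply (bb_const Hk). lia.
      * apply (bb_const Hn). lia.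
    + intros s Hs. exists (S n). exact Hs.
    + intros eps Heps. exists (S n). intros m Hm. rewrite (bb_const Hn Hm). lra.
  - assert (HnB' : forall j, ~ Bd G (w j)) by (intros j Hj; apply HnB; exists j; exact Hj).
    destruct (bb_bounded HA HnB' Hfin) as [B HB].
    assert (Hgr : Un_growing bb).
    { intros k. apply bb_mono. lia. }
    destruct (growing_cv bb Hgr) as [L HL].
    { exists B. intros y [i ->]. apply HB. }
    exists L. apply master; [| | | |exact Hx].
    + intros k. apply (growing_ineq bb L Hgr HL).
    + intros k Hk. exfalso. exact (HnB' k Hk).
    + intros s Hs. destruct (HL (L - s) ltac:(lra)) as [N HN].
      exists N. pose proof (HN N (le_n N)) as H1. unfold R_dist in H1.
      pose proof (growing_ineq bb L Hgr HL N).
      rewrite Rabs_left1 in H1; lra.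
    + intros eps Heps. destruct (HL eps Heps) as [N HN]. exists N. intros m Hm.
      pose proof (HN m Hm) as H1. unfold R_dist in H1.
      pose proof (growing_ineq bb L Hgr HL m).
      rewrite Rabs_left1 in H1; lra.
Qed.

End Chains.

Theorem proposition3p11
  (G : MGraph)
  (* standing assumptions on the metric graph *)
  (Hlen : pos_lengths G) (Hcount : countable_graph G)
  (Hlf : locally_finite G) (Hconn : connected_graph G)
  (Hleaves : Bd_contains_leaves G)
  (Hcompact : compact_Gbar G) (Htd : bdry_totally_disconnected G)
  (* E and E^c nonempty clopen subsets of dGbar *)
  (E : Gbar G -> Prop) (HE : clopen_bdry E)
  (HEne : exists u, E u) (HEcne : exists u, bdry u /\ ~ E u)
  (* f harmonic, = C on E, > C on E^c *)
  (f : Gbar G -> R) (Hf : harmonic f) (C : R) (HC : 0 <= C)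
  (HfE : forall u, E u -> f u = C)
  (HfEc : forall u, bdry u -> ~ E u -> f u > C)
  (eps : R) (Heps : 0 < eps) (Hvol : finite_volume (Neps E eps))
  (t : R) (Ht : regular_value f t) (HCt : C < t)
  (Htmin : exists m, (exists u, bdry u /\ ~ E u /\ f u = m) /\
                     (forall u, bdry u -> ~ E u -> m <= f u) /\ t < m)
  (Hsub : forall u, IsCS u -> f u <= t -> Neps E eps u) :
  forall x : Pt G, f (emb x) = t ->
    exists (gamma : R -> Pt G) (L : R),
      is_path x gamma L /\
      (forall s, 0 <= s < L -> f (emb (gamma s)) <= t) /\
      exists p : Gbar G, bdry p /\ path_limpt gamma L p /\
        (forall q, path_limpt gamma L q -> Deq0 p q).
Proof.
  intros x Hx.
  destruct Ht as [_ Hreg].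
  destruct x as [v | p].
  - exfalso. apply Hreg. exists (inl v). split; [exact I|exact Hx].
  - set (e := fst (proj1_sig p)). set (s0 := snd (proj1_sig p)).
    assert (Hp : 0 < s0 < len e) by (unfold e, s0; destruct p as [[? ?] ?]; simpl; assumption).
    assert (Hxp : edge_pt e s0 = inr p) by (apply edge_pt_inr).
    pose proof (Hlen e) as Hle.
    set (B := edge_slope f e).
    assert (Hform : forall u, 0 <= u <= len e -> f (emb (edge_pt e u)) = FV f (src e) + B * u).
    { intros u Hu. exact (f_edge_formula Hlen Hf Hu). }
    assert (Hts : FV f (src e) + B * s0 = t).
    { rewrite <- Hform; [|lra]. rewrite Hxp. exact Hx. }
    assert (Htg : FV f (tgt e) = FV f (src e) + B * len e).
    { rewrite <- Hform; [|lra]. rewrite edge_pt_len; [reflexivity|exact Hlen]. }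
    destruct (Rtotal_order B 0) as [HB|[HB|HB]].
    +
      eapply (final_desc (e0 := e) (v0 := tgt e) (c0 := s0) (sg0 := 1) (l0 := len e - s0) (t := t)
               Hlen Hlf Hf); [| | | | | | | exact Hsub | exact Hvol | exact Hxp].
      * exists e, false. split; [reflexivity|]. unfold dnu. fold B. lra.
      * lra.
      * left; reflexivity.
      * intros u Hu. lra.
      * eapply on_edge_eqc; [apply (on_edge_endpt e false)|]. simpl. ring.
      * unfold FV in *. rewrite Htg. nra.
      * intros u Hu. rewrite Hform; [|lra]. nra.
    + exfalso. apply Hreg. exists (inr p). split; [|exact Hx].
      simpl. fold e s0. rewrite <- HB.
      apply (deriv_local (A := FV f (src e)) (d := Rmin s0 (len e - s0))).
      { apply Rmin_glb_lt; lra. }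
      intros u Hu. pose proof (Rmin_l s0 (len e - s0)). pose proof (Rmin_r s0 (len e - s0)).
      unfold Rabs in Hu; destruct Rcase_abs in Hu.
      * apply (f_edge_formula Hlen Hf). lra.
      * apply (f_edge_formula Hlen Hf). lra.
    +
      eapply (final_desc (e0 := e) (v0 := src e) (c0 := s0) (sg0 := -1) (l0 := s0) (t := t)
               Hlen Hlf Hf); [| | | | | | | exact Hsub | exact Hvol | exact Hxp].
      * exists e, true. split; [reflexivity|]. unfold dnu. fold B. lra.
      * lra.
      * right; reflexivity.
      * intros u Hu. lra.
      * eapply on_edge_eqc; [apply (on_edge_endpt e true)|]. simpl. ring.
      * nra.
      * intros u Hu. rewrite Hform; [|lra]. nra.
Qed.
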